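(* Let $\Gamma$ be a countable group of almost simple type and let $\tau_N$ be its normal topology. Then $(\Gamma,\tau_N)$ is second countable, $\tau_N$ is finer than the profinite topology on $\Gamma$, and $\tau_N$ is Hausdorff if and only if $\bigcap_{N\in\mathcal{N}(\Gamma)} N=\langle e\rangle$.
   Context: A countable group $\Gamma$ is of almost simple type if it has no nontrivial finite normal subgroups and whenever $M,N\lhd\Gamma$ with $[M,N]=\langle e\rangle$, one of $M,N$ is trivial. Let $\mathcal{N}(\Gamma)=\{N\lhd\Gamma : N\ne\langle e\rangle\}$ be the collection of nontrivial normal subgroups. For $\Gamma$ of almost simple type this family is closed under finite intersections and conjugation invariant, and the normal topology $\tau_N$ on $\Gamma$ is the group topology having $\mathcal{N}(\Gamma)$ as a basis of open neighbourhoods of the identity. *)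

(* Defs.v *)
From Stdlib Require Import List.
Import ListNotations.
Set Implicit Arguments.

(** A group: carrier with an associative multiplication, left identity and
    left inverses (this axiomatisation is equivalent to the usual one). *)
Record group := Group {
  carrier :> Type;
  gmul : carrier -> carrier -> carrier;
  gone : carrier;
  ginv : carrier -> carrier;
  gmulA : forall x y z, gmul x (gmul y z) = gmul (gmul x y) z;
  gmul1g : forall x, gmul gone x = x;
  gmulVg : forall x, gmul (ginv x) x = gone }.

Section GroupNotions.
Variable G : group.
Local Notation "x * y" := (gmul G x y).
Local Notation e := (gone G).
Local Notation "x ^-1" := (ginv G x) (at level 2, format "x ^-1").

(** Countable: enumerated by the naturals (the carrier is nonempty). *)
Definition countable_group : Prop := exists f : nat -> G, forall g : G, exists n, f n = g.

Definition subgroup (H : G -> Prop) : Prop :=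
  H e /\ (forall x y, H x -> H y -> H (x * y)) /\ (forall x, H x -> H (x^-1)).

Definition normal (H : G -> Prop) : Prop :=
  subgroup H /\ (forall g h, H h -> H (g^-1 * h * g)).

Definition trivial_set (H : G -> Prop) : Prop := forall x, H x <-> x = e.

Definition finite_set (H : G -> Prop) : Prop := exists l : list G, forall x, H x -> In x l.

Definition generated (S : G -> Prop) : G -> Prop :=
  fun x => forall K, subgroup K -> (forall y, S y -> K y) -> K x.

Definition commutator (x y : G) : G := x^-1 * y^-1 * x * y.

Definition comm_subgroup (M N : G -> Prop) : G -> Prop :=
  generated (fun z => exists m n, M m /\ N n /\ z = commutator m n).

Definition almost_simple_type : Prop :=
  (forall N, normal N -> finite_set N -> trivial_set N) /\
  (forall M N, normal M -> normal N -> trivial_set (comm_subgroup M N) ->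
     trivial_set M \/ trivial_set N).

Definition nontriv_normal (N : G -> Prop) : Prop := normal N /\ ~ trivial_set N.

(** Normal topology tau_N: the group topology with N(Gamma) as a base of
    neighbourhoods of e; U is open iff every x in U has some x N inside U. *)
Definition open_N (U : G -> Prop) : Prop :=
  forall x, U x -> exists N, nontriv_normal N /\ (forall n, N n -> U (x * n)).

Definition finite_index (N : G -> Prop) : Prop :=
  exists l : list G, forall g, exists h, In h l /\ N (h^-1 * g).

(** Profinite topology: base of neighbourhoods of e = finite-index normal subgroups. *)
Definition open_prof (U : G -> Prop) : Prop :=
  forall x, U x -> exists N, normal N /\ finite_index N /\ (forall n, N n -> U (x * n)).

Definition second_countable_N : Prop :=
  exists B : nat -> G -> Prop,
    (forall k, open_N (B k)) /\
    (forall U, open_N U -> forall x, U x -> exists k, B k x /\ forall y, B k y -> U y).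

Definition hausdorff_N : Prop :=
  forall x y : G, x <> y -> exists U V, open_N U /\ open_N V /\ U x /\ V y /\
     (forall z, ~ (U z /\ V z)).

Definition N_finer_than_prof : Prop := forall U, open_prof U -> open_N U.

Definition inter_nontriv_normal : G -> Prop :=
  fun x => forall N, nontriv_normal N -> N x.

End GroupNotions.

(* Main.v *)
Require Import Defs.
From Stdlib Require Import List Classical Cantor.
Import ListNotations.
Set Implicit Arguments.

Section Lemmas.
Variable G : group.
Local Notation "x * y" := (gmul G x y).
Local Notation e := (gone G).
Local Notation "x ^-1" := (ginv G x) (at level 2, format "x ^-1").

Lemma mulgV (x : G) : x * x^-1 = e.
Proof.
  pose (y := x * x^-1).
  assert (Hyy : y * y = y).
  { unfold y. rewrite <- (gmulA G x (x^-1) (x * x^-1)), (gmulA G (x^-1) x (x^-1)), gmulVg, gmul1g.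
    reflexivity. }
  rewrite <- (gmulVg G y). rewrite <- Hyy at 2. rewrite gmulA, gmulVg, gmul1g. reflexivity.
Qed.

Lemma mulg1 (x : G) : x * e = x.
Proof. rewrite <- (gmulVg G x), gmulA, mulgV. apply gmul1g. Qed.

Lemma mulgK (x y : G) : x * (x^-1 * y) = y.
Proof. rewrite gmulA, mulgV. apply gmul1g. Qed.

Lemma mulKg (x y : G) : x^-1 * (x * y) = y.
Proof. rewrite gmulA, gmulVg. apply gmul1g. Qed.

Lemma mulg_cancel (a b c : G) : a * b = a * c -> b = c.
Proof. intro H. rewrite <- (mulKg a b), <- (mulKg a c), H. reflexivity. Qed.

Lemma invMg (a b : G) : (a * b)^-1 = b^-1 * a^-1.
Proof.
  apply (mulg_cancel (a * b)). rewrite mulgV.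
  rewrite <- gmulA, (gmulA G b), mulgV, gmul1g, mulgV. reflexivity.
Qed.

Lemma invgK (a : G) : (a^-1)^-1 = a.
Proof. apply (mulg_cancel (a^-1)). rewrite mulgV, gmulVg. reflexivity. Qed.

Definition ncl (g : G) : G -> Prop := fun y => forall N : G -> Prop, normal G N -> N g -> N y.

Lemma ncl_normal g : normal G (ncl g).
Proof.
  split; [split; [|split]|]; unfold ncl; intros.
  - destruct H as [[H1 _] _]. exact H1.
  - apply H1; auto. apply H; auto. apply H0; auto.
  - apply H0; auto. apply H; auto.
  - apply H0; auto. apply H; auto.
Qed.

Lemma ncl_g g : ncl g g.
Proof. unfold ncl; auto. Qed.

Lemma nontriv_ex (N : G -> Prop) : ~ trivial_set G N -> N e -> exists n, N n /\ n <> e.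
Proof.
  intros H He. apply NNPP. intro C. apply H. intro x. split.
  - intro Hx. apply NNPP. intro Hne. apply C. eauto.
  - intros ->. exact He.
Qed.

End Lemmas.
Arguments ncl {G}. Arguments ncl_normal {G}. Arguments ncl_g {G}. Arguments nontriv_ex {G}.
Arguments mulgK {G}. Arguments mulg1 {G}. Arguments invMg {G}. Arguments invgK {G}.

Theorem mainTheorem5 (G : group) :
  countable_group G -> almost_simple_type G ->
  (exists g : G, g <> gone G) ->
  second_countable_N G /\ N_finer_than_prof G /\
  (hausdorff_N G <-> @trivial_set G (inter_nontriv_normal G)).
Proof.
  intros [f Hf] [Has _] [g0 Hg0].
  split; [|split].
  - exists (fun k y => let (a, b) := Cantor.of_nat k in
                f b <> gone G /\ ncl (f b) (gmul G (ginv G (f a)) y)).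
    split.
    + intros k y Hy. destruct (Cantor.of_nat k) as [a b]. destruct Hy as [Hb Hy].
      exists (ncl (f b)). split.
      * split. apply ncl_normal. intro T. apply Hb. apply (proj1 (T (f b))). apply ncl_g.
      * intros n Hn. cbv beta. split; auto. rewrite gmulA.
        apply (proj1 (proj2 (proj1 (ncl_normal (f b))))); auto.
    + intros U HU x Ux. destruct (HU x Ux) as [N [[HN HNt] HNU]].
      destruct (nontriv_ex N HNt (proj1 (proj1 HN))) as [n [Nn Hn]].
      destruct (Hf x) as [a Ha]. destruct (Hf n) as [b Hb].
      exists (Cantor.to_nat (a, b)). rewrite Cantor.cancel_of_to. subst.
      split.
      * split; auto. rewrite gmulVg. apply (proj1 (proj1 (ncl_normal _))).
      * intros y [_ Hy]. rewrite <- (mulgK (f a) y). apply HNU. apply Hy; auto.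
  - intros U HU x Ux. destruct (HU x Ux) as [N [HN [Hfi HNU]]].
    exists N. split; auto. split; auto.
    intro T. apply Hg0. destruct Hfi as [l Hl].
    assert (Fin : finite_set G (fun _ : G => True)).
    { exists l. intros y _. destruct (Hl y) as [h [Hin Hh]].
      apply T in Hh. rewrite <- (mulgK h y), Hh, mulg1. exact Hin. }
    assert (Nf : normal G (fun _ : G => True)).
    { split; [split; [|split]|]; auto. }
    apply (Has _ Nf Fin g0). exact I.
  - split.
    + intros Hh x. split.
      * intro Hx. apply NNPP. intro Hne.
        destruct (Hh x (gone G) Hne) as [U [V [OU [OV [Ux [Ve D]]]]]].
        destruct (OV _ Ve) as [N [HN HNV]].
        apply (D x). split; auto. rewrite <- (gmul1g G x). apply HNV. apply Hx. exact HN.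
      * intros -> N HN. apply (proj1 (proj1 (proj1 HN))).
    + intros Ht x y Hxy.
      assert (Hn : ~ inter_nontriv_normal G (gmul G (ginv G x) y)).
      { intro C. apply (proj1 (Ht _)) in C. apply Hxy.
        transitivity (gmul G x (gmul G (ginv G x) y)). rewrite C, mulg1; reflexivity. apply mulgK. }
      assert (exists N, nontriv_normal G N /\ ~ N (gmul G (ginv G x) y)) as [N [HN HNxy]].
      { apply NNPP. intro C. apply Hn. intros N HN. apply NNPP. intro C'. apply C. eauto. }
      destruct HN as [[[N1 [NM NV]] NC] HNt].
      exists (fun z => N (gmul G (ginv G x) z)), (fun z => N (gmul G (ginv G y) z)).
      split; [|split; [|split; [|split]]].
      * intros z Hz. exists N. split. split; [split; [split; [|split]|]|]; auto.
        intros n Hn'. rewrite gmulA. auto.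
      * intros z Hz. exists N. split. split; [split; [split; [|split]|]|]; auto.
        intros n Hn'. rewrite gmulA. auto.
      * simpl. rewrite gmulVg. exact N1.
      * simpl. rewrite gmulVg. exact N1.
      * intros z [Hx Hy]. apply HNxy.
        assert (E : gmul G (ginv G x) y =
                    gmul G (gmul G (ginv G x) z) (ginv G (gmul G (ginv G y) z))).
        { rewrite invMg, invgK, <- gmulA, mulgK. reflexivity. }
        rewrite E. apply NM; auto.
Qed.
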